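(* Let $n\ge 2$, $k\ge 1$, and let $f_i(x)=\frac12 a_ix^2-b_ix$ ($i=1,\dots,n$) be univariate functions satisfying Assumption (B) with parameters $\lambda,L,G$, where $F(x)=\frac1n\sum_{i=1}^n f_i(x)=\frac{\lambda}{2}x^2-bx$. Assume $\frac{L}{\lambda}\le\frac{k}{2\log(nk)}$. Then SGD with random reshuffling, run for $k$ epochs from an arbitrary $x_0\in\mathbb{R}$ with constant step size $\eta=\frac{\log(nk)}{\lambda nk}$, satisfies \[ \mathbb{E}\Big[F(x_k)-\inf_xF(x)\Big]\;\le\;\tilde{O}\left(\frac{\lambda}{n^2k^2}(x_0-x^* )^2+\frac{G^2L^2}{\lambda^3}\left(\frac{1}{n^2k^2}+\frac{1}{nk^3}\right)\right), \] where $x^*=\arg\min_x F(x)$, the expectation is over the $k$ independent uniformly random permutations, and $\tilde O(\cdot)$ hides a universal multiplicative constant and factors polylogarithmic in $n$ and $k$.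
   Context: Assumption (B) (parameters $\lambda,L,G>0$): $F(x)=\frac1n\sum_{i=1}^nf_i(x)$ is $\lambda$-strongly convex on $\mathbb{R}$; each $f_i(x)=\frac{a_i}{2}x^2-b_ix$ is convex (i.e. $a_i\ge 0$), has $L$-Lipschitz derivative (i.e. $a_i\le L$), and satisfies $|f_i'(x^* )|\le G$ where $x^*=\arg\min_xF(x)$. SGD with random reshuffling: for each of $k$ epochs, a fresh uniformly random permutation $\sigma_t$ of $\{1,\dots,n\}$ (independent across epochs) is drawn and the updates $x\leftarrow x-\eta f_{\sigma_t(j)}'(x)$ are performed for $j=1,\dots,n$ in order; $x_t$ is the iterate at the end of epoch $t$. *)

(* Defs.v *)
From mathcomp Require Import all_boot all_fingroup.
From Stdlib Require Import Reals.
Set Implicit Arguments. Unset Strict Implicit. Unset Printing Implicit Defensive.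
Local Open Scope R_scope.

Definition rsum (n : nat) (f : 'I_n -> R) : R := \big[Rplus/R0]_(i < n) f i.

Definition psum (n : nat) (f : 'S_n -> R) : R := \big[Rplus/R0]_(s : 'S_n) f s.

Definition fcomp (a b : R) (x : R) : R := (a / 2) * x * x - b * x.

Definition Fobj (n : nat) (a b : 'I_n -> R) (x : R) : R :=
  (/ INR n) * rsum (fun i => fcomp (a i) (b i) x).

Definition epoch (n : nat) (a b : 'I_n -> R) (eta : R) (s : 'S_n) (x : R) : R :=
  foldl (fun (y : R) (j : 'I_n) => y - eta * (a (s j) * y - b (s j))) x (enum 'I_n).

(* expect_after k x = E[ g(x_k) ] where x_0 = x and x_{t} = epoch sigma_t x_{t-1},
   the sigma_t being independent uniformly random permutations of 'I_n. *)
Fixpoint expect_after (n : nat) (step : 'S_n -> R -> R) (g : R -> R)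
    (k : nat) (x : R) : R :=
  match k with
  | O => g x
  | S k' => (/ INR (n`!)) * psum (fun s => expect_after step g k' (step s x))
  end.

(* Main.v *)
Require Import Defs.
From mathcomp Require Import all_boot all_fingroup.
From Stdlib Require Import Reals.
From HB Require Import structures.
From Stdlib Require Import Lra Psatz.
Set Implicit Arguments. Unset Strict Implicit.
Open Scope R_scope.


HB.instance Definition _ := Monoid.isComLaw.Build R R0 Rplus (fun x y z => esym (Rplus_assoc x y z)) Rplus_comm Rplus_0_l.
HB.instance Definition _ := Monoid.isComLaw.Build R R1 Rmult (fun x y z => esym (Rmult_assoc x y z)) Rmult_comm Rmult_1_l.
HB.instance Definition _ := Monoid.isMulLaw.Build R R0 Rmult Rmult_0_l Rmult_0_r.
HB.instance Definition _ := Monoid.isAddLaw.Build R Rmult Rplus Rmult_plus_distr_r Rmult_plus_distr_l.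

Lemma sumR_le (I : Type) (r : seq I) (P : pred I) (F G : I -> R) :
  (forall i, P i -> F i <= G i) ->
  \big[Rplus/R0]_(i <- r | P i) F i <= \big[Rplus/R0]_(i <- r | P i) G i.
Proof. move=> H; apply: (big_ind2 (fun x y => x <= y)) => //; [lra|move=> *; lra]. Qed.

Lemma sumR_abs (I : Type) (r : seq I) (P : pred I) (F : I -> R) :
  Rabs (\big[Rplus/R0]_(i <- r | P i) F i) <= \big[Rplus/R0]_(i <- r | P i) Rabs (F i).
Proof.
apply: (big_ind2 (fun x y => Rabs x <= y)).
- rewrite Rabs_R0; lra.
- move=> x1 x2 y1 y2 h1 h2; have := Rabs_triang x1 y1; lra.
- move=> i _; lra.
Qed.

Lemma sumR_distrl (I : Type) (r : seq I) (P : pred I) (F : I -> R) c :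
  \big[Rplus/R0]_(i <- r | P i) F i * c = \big[Rplus/R0]_(i <- r | P i) (F i * c).
Proof. by rewrite big_distrl. Qed.

Lemma sumR_distrr (I : Type) (r : seq I) (P : pred I) (F : I -> R) c :
  c * \big[Rplus/R0]_(i <- r | P i) F i = \big[Rplus/R0]_(i <- r | P i) (c * F i).
Proof. by rewrite big_distrr. Qed.

Lemma sumR_split (I : Type) (r : seq I) (P : pred I) (F G : I -> R) :
  \big[Rplus/R0]_(i <- r | P i) (F i + G i) = \big[Rplus/R0]_(i <- r | P i) F i + \big[Rplus/R0]_(i <- r | P i) G i.
Proof. by rewrite big_split. Qed.

Lemma sumR_const (I : finType) (c : R) :
  \big[Rplus/R0]_(i : I) c = INR #|I| * c.
Proof.
rewrite big_const cardE; elim: (size _) => [|m IH] /=; first lra.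
rewrite IH; case: m {IH} => [|m] /=; lra.
Qed.


Fixpoint noise (I : Type) (q g : I -> R) (eta : R) (w : seq I) : R :=
  match w with
  | [::] => 0
  | i :: w' => - eta * g i * \big[Rmult/R1]_(j <- w') q j + noise q g eta w'
  end.


Lemma fold_affine (I : Type) (a b : I -> R) eta xs (w : seq I) x :
  foldl (fun y i => y - eta * (a i * y - b i)) x w - xs =
  \big[Rmult/R1]_(i <- w) (1 - eta * a i) * (x - xs)
  + noise (fun i => 1 - eta * a i) (fun i => a i * xs - b i) eta w.
Proof.
elim: w x => [|i w IH] x /=; first by rewrite big_nil; lra.
rewrite IH big_cons; ring.
Qed.

Lemma noise_closed (I : Type) (q g : I -> R) eta (w : seq I) (i0 : I) :
  noise q g eta w = - eta * \big[Rplus/R0]_(0 <= j < size w)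
     (g (nth i0 w j) * \big[Rmult/R1]_(l <- drop j.+1 w) q l).
Proof.
elim: w => [|i w IH] /=; first by rewrite big_geq //; lra.
rewrite big_nat_recl // IH /= drop0; ring.
Qed.

Lemma noise_abel (I : Type) (a b : I -> R) eta xs L (w : seq I) :
  0 <= eta -> (forall i, 0 <= a i <= L) -> (forall i, 0 <= 1 - eta * a i <= 1) ->
  Rabs (noise (fun i => 1 - eta * a i) (fun i => a i * xs - b i) eta w
        + eta * \big[Rplus/R0]_(i <- w) (a i * xs - b i) * \big[Rmult/R1]_(i <- w) (1 - eta * a i))
  <= eta ^ 2 * L * \big[Rplus/R0]_(0 <= j < size w) Rabs (\big[Rplus/R0]_(i <- drop j w) (a i * xs - b i)).
Proof.
move=> he ha hq.
have hP : forall w : seq I, 0 <= \big[Rmult/R1]_(i <- w) (1 - eta * a i) <= 1.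
  move=> w0; apply: (big_ind (fun x => 0 <= x <= 1)); first lra.
    move=> x y hx hy; nra.
  by move=> i _; apply: hq.
elim: w => [|i w IH].
  by rewrite !big_nil /= Rabs_pos_eq; lra.
rewrite /= big_nat_recl // drop0 !big_cons.
set Gw := \big[Rplus/R0]_(i0 <- w) _ in IH *.
set Pw := \big[Rmult/R1]_(i0 <- w) _ in IH *.
set nw := noise _ _ _ w in IH *.
set S := \big[Rplus/R0]_(0 <= j < size w) _.
have -> : - eta * (a i * xs - b i) * Pw + nw + eta * (a i * xs - b i + Gw) * ((1 - eta * a i) * Pw)
   = (nw + eta * Gw * Pw) + (- eta ^ 2 * a i * Pw * (a i * xs - b i + Gw)) by ring.
have h1 := Rabs_triang (nw + eta * Gw * Pw) (- eta ^ 2 * a i * Pw * (a i * xs - b i + Gw)).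
have h2 : Rabs (- eta ^ 2 * a i * Pw * (a i * xs - b i + Gw)) <= eta ^ 2 * L * Rabs (a i * xs - b i + Gw).
  rewrite !Rabs_mult Rabs_Ropp Rabs_pos_eq; last nra.
  rewrite (Rabs_pos_eq (a i)); last by case: (ha i).
  have hPw : 0 <= Pw <= 1 by exact: hP.
  rewrite (Rabs_pos_eq Pw); last by case: hPw.
  have hX := Rabs_pos (a i * xs - b i + Gw).
  have hai := ha i.
  have h3 : a i * Pw <= L by nra.
  have h4 : 0 <= eta ^ 2 by nra.
  set X := Rabs _ in hX *.
  have : eta ^ 2 * (a i * Pw) * X <= eta ^ 2 * L * X.
    apply: Rmult_le_compat_r => //; apply: Rmult_le_compat_l => //.
  lra.
have -> : S = \big[Rplus/R0]_(0 <= j < size w) Rabs (\big[Rplus/R0]_(i <- drop j w) (a i * xs - b i)) by [].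
have -> : eta * (eta * 1) = eta ^ 2 by ring.
lra.
Qed.


Definition ind (b : bool) : R := if b then 1 else 0.

Lemma sum_enum n (F : 'I_n -> R) :
  \big[Rplus/R0]_(l <- enum 'I_n) F l = \big[Rplus/R0]_(l < n) F l.
Proof. by rewrite big_enum. Qed.

Lemma sum_perm_vals n (s : 'S_n) (F : 'I_n -> R) :
  \big[Rplus/R0]_(l < n) F (s l) = \big[Rplus/R0]_(v < n) F v.
Proof. by rewrite [RHS](reindex_inj (@perm_inj _ s)). Qed.

Lemma sum_perm_mul n (t : 'S_n) (F : 'S_n -> R) :
  \big[Rplus/R0]_(s : 'S_n) F s = \big[Rplus/R0]_(s : 'S_n) F (s * t)%g.
Proof. by rewrite [LHS](reindex_inj (mulIg t)). Qed.

Lemma sum_ind_pick (I : finType) (i : I) (F : I -> R) :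
  \big[Rplus/R0]_(u : I) (ind (i == u) * F u) = F i.
Proof.
rewrite (bigD1 i) //= /ind eqxx big1; first lra.
move=> u /negPf; rewrite eq_sym => ->; lra.
Qed.

Lemma sum_ge0 (I : Type) (r : seq I) (P : pred I) (F : I -> R) :
  (forall i, P i -> 0 <= F i) -> 0 <= \big[Rplus/R0]_(i <- r | P i) F i.
Proof. move=> H; apply: (big_ind (fun x => 0 <= x)) => //; [lra| move=> *; lra]. Qed.

Lemma count_perm n (l v : 'I_n) :
  \big[Rplus/R0]_(s : 'S_n) ind (s l == v) = INR (n`!) / INR n.
Proof.
have hn : (0 < n)%nat := leq_ltn_trans (leq0n l) (ltn_ord l).
have E : forall v', \big[Rplus/R0]_(s : 'S_n) ind (s l == v') = \big[Rplus/R0]_(s : 'S_n) ind (s l == v).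
  move=> v'; rewrite (@sum_perm_mul n (tperm v' v) (fun s => ind (s l == v'))); apply: eq_bigr => s _.
  by rewrite permM -{2}(tpermR v' v) (inj_eq (@perm_inj _ _)).
have : \big[Rplus/R0]_(v' < n) \big[Rplus/R0]_(s : 'S_n) ind (s l == v') = INR (n`!).
  rewrite exchange_big /=.
  rewrite (eq_bigr (fun _ => 1)); last first.
    move=> s _; rewrite -(@sum_ind_pick _ (s l) (fun _ => 1)); apply: eq_bigr => u _; lra.
  by rewrite sumR_const card_Sn Rmult_1_r.
rewrite (eq_bigr _ (fun v' _ => E v')) sumR_const card_ord => H.
have hn' : INR n <> 0 by apply: not_0_INR; apply/eqP; rewrite -lt0n.
field_simplify_eq => //; lra.
Qed.

Lemma ind_ge0 b : 0 <= ind b.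
Proof. rewrite /ind; case: b; lra. Qed.

Lemma sum_ind_all n (s : 'S_n) (j : 'I_n) : \big[Rplus/R0]_(u < n) ind (s j == u) = 1.
Proof. rewrite -(@sum_ind_pick _ (s j) (fun _ => 1)); apply: eq_bigr => u _; lra. Qed.

Lemma swap_identity n (j u0 : 'I_n) (g : 'I_n -> R) (X : 'S_n -> R) :
  \big[Rplus/R0]_(u < n) g u = 0 ->
  \big[Rplus/R0]_(s : 'S_n) (g (s j) * X s) =
  \big[Rplus/R0]_(u < n) (g u * \big[Rplus/R0]_(s : 'S_n) (ind (s j == u) * (X s - X (s * tperm u u0)%g))).
Proof.
move=> hg.
have E1 : \big[Rplus/R0]_(s : 'S_n) (g (s j) * X s) =
  \big[Rplus/R0]_(u < n) (g u * \big[Rplus/R0]_(s : 'S_n) (ind (s j == u) * X s)).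
  under [RHS]eq_bigr do rewrite sumR_distrr.
  rewrite exchange_big /=; apply: eq_bigr => s _.
  rewrite -(@sum_ind_pick _ (s j) (fun u => g u * X s)); apply: eq_bigr => u _; ring.
have E2 : forall u, \big[Rplus/R0]_(s : 'S_n) (ind (s j == u0) * X s) =
   \big[Rplus/R0]_(s : 'S_n) (ind (s j == u) * X (s * tperm u u0)%g).
  move=> u; rewrite (@sum_perm_mul n (tperm u u0) (fun s => ind (s j == u0) * X s)).
  apply: eq_bigr => s _; by rewrite permM -[Y in (_ == Y)](tpermL u u0) (inj_eq (@perm_inj _ _)).
set K := \big[Rplus/R0]_(s : 'S_n) (ind (s j == u0) * X s).
have E3 : \big[Rplus/R0]_(u < n) (g u * \big[Rplus/R0]_(s : 'S_n) (ind (s j == u) * X s)) =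
  \big[Rplus/R0]_(u < n) (g u * (\big[Rplus/R0]_(s : 'S_n) (ind (s j == u) * X s) - K)).
  rewrite [RHS](eq_bigr (fun u => g u * \big[Rplus/R0]_(s : 'S_n) (ind (s j == u) * X s) + g u * (- K))); last by move=> u _; ring.
  rewrite big_split /= -sumR_distrl hg; ring.
rewrite E1 E3; apply: eq_bigr => u _; congr (_ * _).
rewrite /K (E2 u).
rewrite [RHS](eq_bigr (fun s : 'S_n => ind (s j == u) * X s + (ind (s j == u) * (- X (s * tperm u u0)%g)))); last by move=> s _; ring.
rewrite big_split /=.
have -> : \big[Rplus/R0]_(s : 'S_n) (ind (s j == u) * - X (s * tperm u u0)%g) = - \big[Rplus/R0]_(s : 'S_n) (ind (s j == u) * X (s * tperm u u0)%g).
  transitivity (-1 * \big[Rplus/R0]_(s : 'S_n) (ind (s j == u) * X (s * tperm u u0)%g)); last ring.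
  rewrite sumR_distrr; apply: eq_bigr => s _; ring.
by rewrite /Rminus.
Qed.

Lemma sum_ind_perm_const n (j : 'I_n) (F : 'I_n -> R) c :
  \big[Rplus/R0]_(u < n) (F u * \big[Rplus/R0]_(s : 'S_n) (ind (s j == u) * c)) =
  \big[Rplus/R0]_(s : 'S_n) (F (s j) * c).
Proof.
under eq_bigr do rewrite sumR_distrr.
rewrite exchange_big /=; apply: eq_bigr => s _.
rewrite -(@sum_ind_pick _ (s j) (fun u => F u * c)); apply: eq_bigr => u _; ring.
Qed.

Lemma swap_mean n (j : 'I_n) (g : 'I_n -> R) (c : 'S_n -> R) G D :
  \big[Rplus/R0]_(u < n) g u = 0 -> (forall u, Rabs (g u) <= G) ->
  (forall s u u0, Rabs (c s - c (s * tperm u u0)%g) <= D) ->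
  Rabs (\big[Rplus/R0]_(s : 'S_n) (g (s j) * c s)) <= INR (n`!) * G * D.
Proof.
move=> hg hG hD.
have hG0 : 0 <= G by have := Rabs_pos (g j); have := hG j; lra.
rewrite (swap_identity j j) //.
apply: Rle_trans (@sumR_abs _ _ _ _) _.
apply: (@Rle_trans _ (\big[Rplus/R0]_(u < n) (G * \big[Rplus/R0]_(s : 'S_n) (ind (s j == u) * D)))).
  apply: sumR_le => u _; rewrite Rabs_mult; apply: Rmult_le_compat => //; try exact: Rabs_pos.
  apply: Rle_trans (@sumR_abs _ _ _ _) _; apply: sumR_le => s _.
  rewrite Rabs_mult (Rabs_pos_eq _ (ind_ge0 _)); apply: Rmult_le_compat_l; [exact: ind_ge0|exact: hD].
rewrite sum_ind_perm_const sumR_const card_Sn; lra.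
Qed.

Lemma swap_pair n (l l' : 'I_n) (g : 'I_n -> R) G :
  l != l' ->
  \big[Rplus/R0]_(u < n) g u = 0 -> (forall u, Rabs (g u) <= G) ->
  Rabs (\big[Rplus/R0]_(s : 'S_n) (g (s l) * g (s l'))) <= 2 * G ^ 2 * (INR (n`!) / INR n).
Proof.
move=> hll hg hG.
have hG0 : 0 <= G by have := Rabs_pos (g l); have := hG l; lra.
rewrite (swap_identity l l') //.
apply: Rle_trans (@sumR_abs _ _ _ _) _.
apply: (@Rle_trans _ (\big[Rplus/R0]_(u < n) (G * \big[Rplus/R0]_(s : 'S_n) (ind (s l == u) * (2 * G * ind (s l' == l')))))).
  apply: sumR_le => u _; rewrite Rabs_mult; apply: Rmult_le_compat => //; try exact: Rabs_pos.
  apply: Rle_trans (@sumR_abs _ _ _ _) _; apply: sumR_le => s _.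
  rewrite Rabs_mult (Rabs_pos_eq _ (ind_ge0 _)).
  rewrite /ind; case: eqP => [hsu|_]; last lra.
  rewrite !Rmult_1_l permM.
  case: eqP => [->|hne].
    have := hG l'; have := hG (tperm u l' l'); have := Rabs_triang (g l') (- g (tperm u l' l')).
    rewrite Rabs_Ropp => h1 h2 h3; apply: Rle_trans h1 _; apply: Rle_trans (Rplus_le_compat _ _ _ _ h3 h2) _; lra.
  rewrite tpermD; first by rewrite Rminus_diag Rabs_R0; lra.
    by apply/eqP => h; move/eqP: hll; apply; apply: (@perm_inj _ s); rewrite hsu h.
  by apply/eqP => h; apply: hne.
under eq_bigr do rewrite sumR_distrr.
rewrite exchange_big /=.
have -> : \big[Rplus/R0]_(s : 'S_n) \big[Rplus/R0]_(u < n) (G * (ind (s l == u) * (2 * G * ind (s l' == l')))) = \big[Rplus/R0]_(s : 'S_n) (2 * G ^ 2 * ind (s l' == l')).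
  apply: eq_bigr => s _.
  rewrite -(@sum_ind_pick _ (s l) (fun u => 2 * G ^ 2 * ind (s l' == l'))) /=.
  apply: eq_bigr => u _; ring.
by rewrite -sumR_distrr count_perm; lra.
Qed.

Lemma sum_sub_le (I : finType) (P : pred I) (F : I -> R) :
  (forall i, 0 <= F i) -> \big[Rplus/R0]_(i | P i) F i <= \big[Rplus/R0]_i F i.
Proof.
move=> hF; rewrite big_mkcond /=; apply: sumR_le => i _; case: (P i); [lra | exact: hF].
Qed.

Lemma sq_le_G (x G : R) : Rabs x <= G -> x * x <= G ^ 2.
Proof.
move=> h; case: (Rle_or_lt 0 x) => hx.
  rewrite Rabs_pos_eq in h => //; nra.
rewrite Rabs_left in h => //; nra.
Qed.

Lemma second_moment n (D : seq 'I_n) (g : 'I_n -> R) G :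
  (0 < n)%nat -> uniq D ->
  \big[Rplus/R0]_(u < n) g u = 0 -> (forall u, Rabs (g u) <= G) ->
  \big[Rplus/R0]_(s : 'S_n) (\big[Rplus/R0]_(l <- D) g (s l)) ^ 2
   <= 3 * INR n * INR (n`!) * G ^ 2.
Proof.
move=> hn hD hg hG.
have hG0 : 0 <= G by have := Rabs_pos (g (Ordinal hn)); have := hG (Ordinal hn); lra.
have hnR : 0 < INR n by apply: lt_0_INR; apply/ltP.
set Q := INR (n`!) / INR n.
have hQ : 0 <= Q by rewrite /Q; apply: Rmult_le_pos; [apply: pos_INR| apply/Rlt_le/Rinv_0_lt_compat].
have hnQ : INR n * Q = INR (n`!) by rewrite /Q; field; lra.
pose B (l l' : 'I_n) := if l == l' then INR (n`!) * G ^ 2 else 2 * G ^ 2 * Q.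
have hB : forall l l', Rabs (\big[Rplus/R0]_(s : 'S_n) (g (s l) * g (s l'))) <= B l l'.
  move=> l l'; rewrite /B; case: eqP => [<-|/eqP hne]; last exact: swap_pair.
  rewrite Rabs_pos_eq; last by apply: sum_ge0 => s _; nra.
  apply: (@Rle_trans _ (\big[Rplus/R0]_(s : 'S_n) G ^ 2)).
    by apply: sumR_le => s _; apply: sq_le_G.
  by rewrite sumR_const card_Sn; lra.
have hB0 : forall l l', 0 <= B l l'.
  by move=> l l'; rewrite /B; case: eqP => _; [apply: Rmult_le_pos; [apply: pos_INR|nra] | nra].
have E : forall s : 'S_n, (\big[Rplus/R0]_(l <- D) g (s l)) ^ 2 =
   \big[Rplus/R0]_(l <- D) \big[Rplus/R0]_(l' <- D) (g (s l) * g (s l')).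
  move=> s; rewrite /= Rmult_1_r sumR_distrl; apply: eq_bigr => l _; by rewrite sumR_distrr.
rewrite (eq_bigr _ (fun s _ => E s)) exchange_big /=.
under eq_bigr do rewrite exchange_big /=.
apply: (@Rle_trans _ (\big[Rplus/R0]_(l <- D) \big[Rplus/R0]_(l' <- D) B l l')).
  apply: sumR_le => l _; apply: sumR_le => l' _; apply: Rle_trans (hB l l'); exact: Rle_abs.
rewrite big_uniq //.
apply: Rle_trans (sum_sub_le _ _) _.
  by move=> l; rewrite big_uniq //; apply: sum_ge0.
apply: (@Rle_trans _ (\big[Rplus/R0]_(l < n) (3 * INR (n`!) * G ^ 2))).
  apply: sumR_le => l _; rewrite big_uniq //.
  apply: Rle_trans (sum_sub_le _ _) _; first by move=> l'; exact: hB0.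
  rewrite (bigD1 l) //= /B eqxx.
  apply: (@Rle_trans _ (INR (n`!) * G ^ 2 + \big[Rplus/R0]_(l' < n | l' != l) (2 * G ^ 2 * Q))).
    apply: Rplus_le_compat_l; apply: sumR_le => l' /negPf; rewrite eq_sym => ->; lra.
  apply: Rle_trans (Rplus_le_compat_l _ _ _ (sum_sub_le _ _)) _.
    move=> _; nra.
  rewrite sumR_const card_ord.
  have -> : INR n * (2 * G ^ 2 * Q) = 2 * G ^ 2 * (INR n * Q) by ring.
  rewrite hnQ; lra.
rewrite sumR_const card_ord; lra.
Qed.


Lemma prod_diff (I : Type) (r : seq I) (x y : I -> R) :
  (forall i, 0 <= x i <= 1) -> (forall i, 0 <= y i <= 1) ->
  Rabs (\big[Rmult/R1]_(i <- r) x i - \big[Rmult/R1]_(i <- r) y i)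
  <= \big[Rplus/R0]_(i <- r) Rabs (x i - y i).
Proof.
move=> hx hy.
have hP : forall z : I -> R, (forall i, 0 <= z i <= 1) -> 0 <= \big[Rmult/R1]_(i <- r) z i <= 1.
  move=> z hz; apply: (big_ind (fun t => 0 <= t <= 1)); first lra.
    move=> a b ha hb; nra.
  by move=> i _; apply: hz.
elim: r hP => [|i r IH] hP; first by rewrite !big_nil Rminus_diag Rabs_R0; lra.
rewrite !big_cons.
have hP' : forall z : I -> R, (forall i, 0 <= z i <= 1) -> 0 <= \big[Rmult/R1]_(i <- r) z i <= 1.
  move=> z hz; apply: (big_ind (fun t => 0 <= t <= 1)); first lra.
    move=> a b ha hb; nra.
  by move=> j _; apply: hz.
have := IH hP'.
set X := \big[Rmult/R1]_(j <- r) x j.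
set Y := \big[Rmult/R1]_(j <- r) y j.
have hX := hP' x hx; have hY := hP' y hy; rewrite -/X -/Y in hX hY.
have hxi := hx i; have hyi := hy i.
have -> : x i * X - y i * Y = (x i - y i) * X + y i * (X - Y) by ring.
move=> h.
apply: Rle_trans (Rabs_triang _ _) _.
rewrite !Rabs_mult (Rabs_pos_eq X) ?(Rabs_pos_eq (y i)); try lra.
have := Rabs_pos (x i - y i); have := Rabs_pos (X - Y); nra.
Qed.

Lemma cs_list (I : Type) (r : seq I) (y : I -> R) :
  (\big[Rplus/R0]_(i <- r) y i) ^ 2 <= INR (size r) * \big[Rplus/R0]_(i <- r) (y i) ^ 2.
Proof.
elim: r => [|i r IH]; first by rewrite !big_nil /=; lra.
rewrite !big_cons.
set S := \big[Rplus/R0]_(j <- r) y j in IH *.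
set Q := \big[Rplus/R0]_(j <- r) y j ^ 2 in IH *.
have hQ : 0 <= Q by apply: sum_ge0 => j _; nra.
have hm := pos_INR (size r).
have e : INR (size r).+1 = INR (size r) + 1 by rewrite -addn1 plus_INR.
change (size (i :: r)) with (size r).+1; rewrite e.
case: (Req_dec (INR (size r)) 0) => hm0.
  rewrite hm0 in IH *; have : S = 0 by nra.
  move=> ->; nra.
have h : 2 * y i * S <= INR (size r) * y i ^ 2 + Q.
  have hmp : 0 < INR (size r) by lra.
  have : 2 * INR (size r) * y i * S <= INR (size r) ^ 2 * y i ^ 2 + INR (size r) * Q.
    have := pow2_ge_0 (INR (size r) * y i - S); nra.
  move=> h2.
  apply: (Rmult_le_reg_l (INR (size r))) => //; nra.
nra.
Qed.


Lemma foldl_map' (T U V : Type) (f : U -> V -> U) (h : T -> V) (z : U) (l : seq T) :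
  foldl (fun y j => f y (h j)) z l = foldl f z (map h l).
Proof. by elim: l z => [|x l IH] z //=. Qed.

Lemma prod_perm_vals n (s : 'S_n) (F : 'I_n -> R) :
  \big[Rmult/R1]_(l < n) F (s l) = \big[Rmult/R1]_(v < n) F v.
Proof. by rewrite [RHS](reindex_inj (@perm_inj _ s)). Qed.

Lemma prod_enum n (F : 'I_n -> R) :
  \big[Rmult/R1]_(l <- enum 'I_n) F l = \big[Rmult/R1]_(l < n) F l.
Proof. by rewrite big_enum. Qed.

Lemma epoch_affine n (a b : 'I_n -> R) eta xs (s : 'S_n) x :
  epoch a b eta s x - xs = \big[Rmult/R1]_(i < n) (1 - eta * a i) * (x - xs)
     + noise (fun i => 1 - eta * a i) (fun i => a i * xs - b i) eta (map s (enum 'I_n)).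
Proof.
rewrite /epoch (foldl_map' (fun y i => y - eta * (a i * y - b i))) fold_affine.
by rewrite big_map prod_enum (prod_perm_vals s (fun v => 1 - eta * a v)).
Qed.

Lemma gsum_full n (g : 'I_n -> R) (s : 'S_n) :
  \big[Rplus/R0]_(i <- map s (enum 'I_n)) g i = \big[Rplus/R0]_(i < n) g i.
Proof. by rewrite big_map sum_enum (sum_perm_vals s g). Qed.

Lemma noise_positional n (q g : 'I_n -> R) eta (s : 'S_n) (i0 : 'I_n) :
  noise q g eta (map s (enum 'I_n)) =
  - eta * \big[Rplus/R0]_(j < n) (g (s j) * \big[Rmult/R1]_(l <- drop j.+1 (map s (enum 'I_n))) q l).
Proof.
rewrite (noise_closed q g eta _ i0) size_map size_enum_ord big_mkord.
congr (_ * _); apply: eq_bigr => j _.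
by rewrite (nth_map i0) ?size_enum_ord // nth_ord_enum.
Qed.

Lemma qswap_sum n (a : 'I_n -> R) eta L (u u0 : 'I_n) :
  0 <= eta -> (forall i, 0 <= a i <= L) ->
  \big[Rplus/R0]_(v < n) Rabs ((1 - eta * a v) - (1 - eta * a (tperm u u0 v))) <= 2 * (eta * L).
Proof.
move=> he ha.
have hL : 0 <= eta * L by have := ha u; nra.
have hab : forall v w, Rabs ((1 - eta * a v) - (1 - eta * a w)) <= eta * L.
  move=> v w; have := ha v; have := ha w => h1 h2.
  have -> : (1 - eta * a v) - (1 - eta * a w) = eta * (a w - a v) by ring.
  rewrite Rabs_mult Rabs_pos_eq //.
  apply: Rmult_le_compat_l => //; apply: Rabs_le; lra.
apply: (@Rle_trans _ (\big[Rplus/R0]_(v < n) (ind (u == v) * (eta * L) + ind (u0 == v) * (eta * L)))).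
  apply: sumR_le => v _.
  case: (eqVneq u v) => [<-|huv].
    rewrite tpermL; have h := hab u u0; rewrite /ind /=; case: (u0 == u); lra.
  case: (eqVneq u0 v) => [<-|hu0v].
    rewrite tpermR /ind ?eqxx /=; have := hab u0 u; lra.
  rewrite tpermD // Rminus_diag Rabs_R0 /ind ?(negPf hu0v) /=; lra.
rewrite big_split /= !sum_ind_pick; lra.
Qed.

Lemma c_swap n (a : 'I_n -> R) eta L k (s : 'S_n) (u u0 : 'I_n) :
  0 <= eta -> (forall i, 0 <= a i <= L) -> (forall i, 0 <= 1 - eta * a i <= 1) ->
  Rabs (\big[Rmult/R1]_(l <- drop k (map s (enum 'I_n))) (1 - eta * a l)
      - \big[Rmult/R1]_(l <- drop k (map (s * tperm u u0)%g (enum 'I_n))) (1 - eta * a l))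
  <= 2 * (eta * L).
Proof.
move=> he ha hq.
have -> : map (s * tperm u u0)%g (enum 'I_n) = map (tperm u u0) (map s (enum 'I_n)).
  by elim: (enum _) => //= l r ->; rewrite permM.
set W := map s (enum 'I_n).
rewrite -(map_drop k (tperm u u0) W) [X in _ - X]big_map.
apply: Rle_trans (@prod_diff _ _ (fun l => 1 - eta * a l) (fun l => 1 - eta * a (tperm u u0 l)) hq (fun i => hq _)) _.
apply: (@Rle_trans _ (\big[Rplus/R0]_(l <- W) Rabs ((1 - eta * a l) - (1 - eta * a (tperm u u0 l))))).
  rewrite -{2}(cat_take_drop k W) big_cat /=.
  have : 0 <= \big[Rplus/R0]_(l <- take k W) Rabs ((1 - eta * a l) - (1 - eta * a (tperm u u0 l))).
    by apply: sum_ge0 => l _; apply: Rabs_pos.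
  move=> h; rewrite -[X in X <= _]Rplus_0_l; exact: Rplus_le_compat_r.
rewrite /W big_map sum_enum (sum_perm_vals s (fun v => Rabs ((1 - eta * a v) - (1 - eta * a (tperm u u0 v))))).
exact: qswap_sum.
Qed.

Lemma mean_bound n (a b : 'I_n -> R) eta xs L G :
  (0 < n)%nat -> 0 <= eta -> (forall i, 0 <= a i <= L) -> (forall i, 0 <= 1 - eta * a i <= 1) ->
  \big[Rplus/R0]_(u < n) (a u * xs - b u) = 0 -> (forall u, Rabs (a u * xs - b u) <= G) ->
  Rabs (\big[Rplus/R0]_(s : 'S_n) noise (fun i => 1 - eta * a i) (fun i => a i * xs - b i) eta (map s (enum 'I_n)))
   <= INR (n`!) * (2 * eta ^ 2 * INR n * L * G).
Proof.
move=> hn he ha hq hg hG.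
pose i0 := Ordinal hn.
under eq_bigr do rewrite (noise_positional _ _ _ _ i0).
rewrite -sumR_distrr exchange_big /= Rabs_mult Rabs_Ropp (Rabs_pos_eq eta) //.
apply: (@Rle_trans _ (eta * \big[Rplus/R0]_(j < n) (INR (n`!) * G * (2 * (eta * L))))).
  apply: Rmult_le_compat_l => //.
  apply: Rle_trans (@sumR_abs _ _ _ _) _; apply: sumR_le => j _.
  apply: (swap_mean j (g := fun i => a i * xs - b i)
     (c := fun s => \big[Rmult/R1]_(l <- drop j.+1 (map s (enum 'I_n))) (1 - eta * a l))) => //.
  move=> s u u0; exact: c_swap.
rewrite sumR_const card_ord; lra.
Qed.

Lemma var_bound n (a b : 'I_n -> R) eta xs L G :
  (0 < n)%nat -> 0 <= eta -> (forall i, 0 <= a i <= L) -> (forall i, 0 <= 1 - eta * a i <= 1) ->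
  \big[Rplus/R0]_(u < n) (a u * xs - b u) = 0 -> (forall u, Rabs (a u * xs - b u) <= G) ->
  \big[Rplus/R0]_(s : 'S_n) (noise (fun i => 1 - eta * a i) (fun i => a i * xs - b i) eta (map s (enum 'I_n))) ^ 2
   <= INR (n`!) * (3 * eta ^ 4 * L ^ 2 * INR n ^ 3 * G ^ 2).
Proof.
move=> hn he ha hq hg hG.
have hL : 0 <= L by have := ha (Ordinal hn); lra.
pose T (s : 'S_n) (j : nat) := \big[Rplus/R0]_(l <- drop j (enum 'I_n)) (a (s l) * xs - b (s l)).
have h1 : forall s : 'S_n,
   (noise (fun i => 1 - eta * a i) (fun i => a i * xs - b i) eta (map s (enum 'I_n))) ^ 2
   <= eta ^ 4 * L ^ 2 * (INR n * \big[Rplus/R0]_(0 <= j < n) (T s j) ^ 2).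
  move=> s.
  have := @noise_abel _ a b eta xs L (map s (enum 'I_n)) he ha hq.
  rewrite gsum_full hg Rmult_0_r Rmult_0_l Rplus_0_r size_map size_enum_ord => hN.
  have hS : 0 <= \big[Rplus/R0]_(0 <= j < n) Rabs (\big[Rplus/R0]_(i <- drop j (map s (enum 'I_n))) (a i * xs - b i)).
    by apply: sum_ge0 => j _; apply: Rabs_pos.
  have := sq_le_G hN.
  set S := \big[Rplus/R0]_(0 <= j < n) _ in hS *.
  move=> hsq.
  have hcs := cs_list (index_iota 0 n) (fun j => Rabs (\big[Rplus/R0]_(i <- drop j (map s (enum 'I_n))) (a i * xs - b i))).
  rewrite size_iota in hcs.
  have E : forall j, Rabs (\big[Rplus/R0]_(i <- drop j (map s (enum 'I_n))) (a i * xs - b i)) ^ 2 = T s j ^ 2.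
    by move=> j; rewrite pow2_abs /T -map_drop big_map.
  have E2 : \big[Rplus/R0]_(0 <= j < n) Rabs (\big[Rplus/R0]_(i <- drop j (map s (enum 'I_n))) (a i * xs - b i)) ^ 2
     = \big[Rplus/R0]_(0 <= j < n) (T s j) ^ 2 by apply: eq_bigr => j _; exact: E.
  rewrite E2 -/S in hcs.
  have hsq2 : forall x y, x * x <= y -> x ^ 2 <= y by move=> x y h; rewrite /= Rmult_1_r.
  rewrite subn0 in hcs.
  apply: Rle_trans (hsq2 _ _ hsq) _.
  have -> : (eta ^ 2 * L * S) ^ 2 = eta ^ 4 * L ^ 2 * S ^ 2 by ring.
  apply: Rmult_le_compat_l => //; nra.
apply: (@Rle_trans _ (\big[Rplus/R0]_(s : 'S_n) (eta ^ 4 * L ^ 2 * (INR n * \big[Rplus/R0]_(0 <= j < n) (T s j) ^ 2)))).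
  by apply: sumR_le => s _; exact: h1.
rewrite -sumR_distrr.
under eq_bigr do rewrite sumR_distrr.
rewrite exchange_big.
apply: (@Rle_trans _ (eta ^ 4 * L ^ 2 * \big[Rplus/R0]_(0 <= j < n) (INR n * (3 * INR n * INR (n`!) * G ^ 2)))).
  apply: Rmult_le_compat_l; first nra.
  apply: sumR_le => j _; rewrite -sumR_distrr; apply: Rmult_le_compat_l; first exact: pos_INR.
  rewrite /T; apply: (@second_moment n _ (fun i => a i * xs - b i)) => //; exact: drop_uniq (enum_uniq _).
rewrite big_mkord sumR_const card_ord.
have h0 := pos_INR (n`!).
have -> : INR n * (INR n * (3 * INR n * INR n`! * G ^ 2)) = INR n`! * (3 * INR n ^ 3 * G ^ 2) by ring.
right; ring.
Qed.


Lemma one_step n (a b : 'I_n -> R) eta xs L G x P mu v K :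
  (0 < n)%nat -> 0 <= eta -> (forall i, 0 <= a i <= L) -> (forall i, 0 <= 1 - eta * a i <= 1) ->
  \big[Rplus/R0]_(u < n) (a u * xs - b u) = 0 -> (forall u, Rabs (a u * xs - b u) <= G) ->
  P = \big[Rmult/R1]_(i < n) (1 - eta * a i) ->
  mu = 2 * eta ^ 2 * INR n * L * G -> v = 3 * eta ^ 4 * L ^ 2 * INR n ^ 3 * G ^ 2 ->
  0 < K ->
  / INR (n`!) * psum (fun s => (epoch a b eta s x - xs) ^ 2)
  <= (1 + / K) * P ^ 2 * (x - xs) ^ 2 + (K * mu ^ 2 + v).
Proof.
move=> hn he ha hq hg hG hP hmu hv hK.
have hf : 0 < INR (n`!) by apply: lt_0_INR; apply/ltP; exact: fact_gt0.
pose N (s : 'S_n) := noise (fun i => 1 - eta * a i) (fun i => a i * xs - b i) eta (map s (enum 'I_n)).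
have hmean := mean_bound hn he ha hq hg hG.
have hvar := var_bound hn he ha hq hg hG.
rewrite -hmu in hmean; rewrite -hv in hvar.
rewrite /psum.
have E : forall s : 'S_n, (epoch a b eta s x - xs) ^ 2 =
   P ^ 2 * (x - xs) ^ 2 + (2 * P * (x - xs)) * N s + N s ^ 2.
  by move=> s; rewrite epoch_affine -hP /N; ring.
rewrite (eq_bigr _ (fun s _ => E s)) !big_split sumR_const -sumR_distrr card_Sn.
set SN := \big[Rplus/R0]_(s : 'S_n) N s in hmean *.
set SN2 := \big[Rplus/R0]_(s : 'S_n) N s ^ 2 in hvar *.
set y := x - xs.
have e1 : / INR n`! * (INR n`! * (P ^ 2 * y ^ 2) + 2 * P * y * SN + SN2)
   = P ^ 2 * y ^ 2 + 2 * P * y * (SN / INR n`!) + SN2 / INR n`! by field; lra.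
rewrite e1.
have hm : Rabs (SN / INR n`!) <= mu.
  rewrite Rabs_mult Rabs_inv (Rabs_pos_eq (INR n`!)); last lra.
  apply: (Rmult_le_reg_r (INR n`!)) => //.
  rewrite Rmult_assoc Rinv_l; last lra.
  lra.
have hs : SN2 / INR n`! <= v.
  apply: (Rmult_le_reg_r (INR n`!)) => //.
  rewrite /Rdiv Rmult_assoc Rinv_l; last lra.
  lra.
have hc : 2 * P * y * (SN / INR n`!) <= / K * P ^ 2 * y ^ 2 + K * mu ^ 2.
  set m := SN / INR n`! in hm *; clearbody m.
  have h1 : 2 * P * y * m <= 2 * Rabs (P * y) * mu.
    have := Rle_abs (P * y * m); rewrite !Rabs_mult => h.
    have := Rabs_pos P; have := Rabs_pos y; have := Rabs_pos m => h2 h3 h4.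
    have : Rabs P * Rabs y * Rabs m <= Rabs P * Rabs y * mu by apply: Rmult_le_compat_l; nra.
    nra.
  have h2 : 2 * Rabs (P * y) * mu <= / K * (Rabs (P * y)) ^ 2 + K * mu ^ 2.
    have := pow2_ge_0 (Rabs (P * y) - K * mu) => h3.
    apply: (Rmult_le_reg_l K) => //.
    have -> : K * (/ K * Rabs (P * y) ^ 2 + K * mu ^ 2) = Rabs (P * y) ^ 2 + K * (K * mu ^ 2) by field; lra.
    nra.
  rewrite pow2_abs in h2.
  have -> : / K * P ^ 2 * y ^ 2 = / K * (P * y) ^ 2 by ring.
  lra.
have -> : (1 + / K) * P ^ 2 * y ^ 2 = P ^ 2 * y ^ 2 + / K * P ^ 2 * y ^ 2 by ring.
lra.
Qed.

Lemma psum_ext n (F G : 'S_n -> R) : (forall s, F s = G s) -> psum F = psum G.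
Proof. by move=> h; rewrite /psum; apply: eq_bigr => s _. Qed.

Lemma psum_affine n (F : 'S_n -> R) c1 c2 :
  psum (fun s => c1 * F s + c2) = c1 * psum F + INR (n`!) * c2.
Proof. by rewrite /psum big_split /= sumR_const card_Sn -sumR_distrr. Qed.

Lemma expect_bound n (step : 'S_n -> R -> R) (g : R -> R) lam xs r D :
  0 <= r <= 1 -> 0 <= lam -> 0 <= D ->
  (forall x, g x = lam / 2 * (x - xs) ^ 2) ->
  (forall x, / INR (n`!) * psum (fun s => (step s x - xs) ^ 2) <= r * (x - xs) ^ 2 + D) ->
  forall j x, expect_after step g j x <= lam / 2 * (r ^ j * (x - xs) ^ 2 + INR j * D).
Proof.
move=> hr hl hD hg hstep.
have hf : 0 < INR (n`!) by apply: lt_0_INR; apply/ltP; exact: fact_gt0.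
elim=> [|j IH] x.
  rewrite /= hg; lra.
rewrite [expect_after _ _ _ _]/=.
have hrj : 0 <= r ^ j <= 1.
  clear IH; elim: j => [|j' IHj] /=; nra.
apply: (@Rle_trans _ (/ INR (n`!) * psum (fun s => lam / 2 * (r ^ j * (step s x - xs) ^ 2 + INR j * D)))).
  apply: Rmult_le_compat_l; first by apply/Rlt_le/Rinv_0_lt_compat.
  by rewrite /psum; apply: sumR_le => s _; apply: IH.
have e : / INR (n`!) * psum (fun s => lam / 2 * (r ^ j * (step s x - xs) ^ 2 + INR j * D))
   = lam / 2 * (r ^ j * (/ INR (n`!) * psum (fun s => (step s x - xs) ^ 2)) + INR j * D).
  rewrite (@psum_ext n _ (fun s => lam / 2 * r ^ j * (step s x - xs) ^ 2 + lam / 2 * INR j * D)); last by move=> s; ring.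
  rewrite psum_affine; field; lra.
rewrite e.
have := hstep x => h.
have h2 : r ^ j * (/ INR (n`!) * psum (fun s => (step s x - xs) ^ 2)) <= r ^ j * (r * (x - xs) ^ 2 + D).
  by apply: Rmult_le_compat_l; lra.
apply: Rmult_le_compat_l; first lra.
rewrite S_INR -tech_pow_Rmult.
have : r ^ j * D <= D by nra.
have := pow2_ge_0 (x - xs).
nra.
Qed.


Lemma rsum_lin n (a b : 'I_n -> R) (c d : R) :
  rsum (fun i => a i * c - b i * d) = rsum a * c - rsum b * d.
Proof.
rewrite /rsum (eq_bigr (fun i => a i * c + b i * (- d))); last by move=> i _; ring.
rewrite big_split /= -!sumR_distrl; ring.
Qed.

Lemma Fobj_eq n (a b : 'I_n -> R) x :
  Fobj a b x = / INR n * (rsum a / 2 * x * x - rsum b * x).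
Proof.
rewrite /Fobj.
have -> : rsum (fun i => fcomp (a i) (b i) x) = rsum (fun i => a i * (x * x / 2) - b i * x).
  by rewrite /rsum; apply: eq_bigr => i _; rewrite /fcomp /Rdiv; ring.
rewrite rsum_lin /Rdiv; ring.
Qed.

Lemma exp_le x y : x <= y -> exp x <= exp y.
Proof. case/Rle_lt_or_eq_dec => h; [apply/Rlt_le/exp_increasing | rewrite h]; lra. Qed.

Lemma exp_pow x k : exp x ^ k = exp (INR k * x).
Proof.
elim: k => [|k IH]; first by rewrite /= Rmult_0_l exp_0.
rewrite -tech_pow_Rmult IH S_INR -exp_plus; congr exp; ring.
Qed.

Lemma prod_exp (I : Type) (r : seq I) (c : I -> R) :
  (forall i, 0 <= 1 - c i) ->
  0 <= \big[Rmult/R1]_(i <- r) (1 - c i) <= exp (- \big[Rplus/R0]_(i <- r) c i).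
Proof.
move=> hc; elim: r => [|i r IH]; first by rewrite !big_nil Ropp_0 exp_0; lra.
rewrite !big_cons Ropp_plus_distr exp_plus.
have h1 := exp_ineq1_le (- c i); have h0 := hc i.
split; first nra.
apply: Rmult_le_compat; lra.
Qed.

Theorem theorem5 :
  exists (C : R) (p : nat), 0 < C /\
  forall (n k : nat) (a b : 'I_n -> R) (lam L G x0 xs : R),
    (2 <= n)%nat -> (1 <= k)%nat ->
    0 < lam -> 0 < L -> 0 < G ->
    (* F(x) = (1/n) sum f_i(x) = lam/2 x^2 - b x  with b = (1/n) sum b_i *)
    (forall x, Fobj a b x = (lam / 2) * x * x - ((/ INR n) * rsum b) * x) ->
    (* xs = argmin F *)
    (forall y, Fobj a b xs <= Fobj a b y) ->
    (* each f_i convex with L-Lipschitz derivative, |f_i'(xs)| <= G *)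
    (forall i, 0 <= a i) ->
    (forall i, a i <= L) ->
    (forall i, Rabs (a i * xs - b i) <= G) ->
    L / lam <= INR k / (2 * ln (INR n * INR k)) ->
    expect_after (epoch a b (ln (INR n * INR k) / (lam * INR n * INR k))) (fun x => Fobj a b x - Fobj a b xs) k x0
    <= C * (ln (INR n * INR k)) ^ p *
       ( lam / (INR n ^ 2 * INR k ^ 2) * (x0 - xs) ^ 2
       + G ^ 2 * L ^ 2 / lam ^ 3
         * (/ (INR n ^ 2 * INR k ^ 2) + / (INR n * INR k ^ 3)) ).
Proof.
exists 100, 4%nat; split; first lra.
move=> n k a b lam L G x0 xs hn hk hl hL hG hF hmin ha haL hgG hratio.
have hN : 2 <= INR n by have := le_INR 2 n (elimT leP hn) => /= h; lra.
have hK : 1 <= INR k by have := le_INR 1 k (elimT leP hk) => /= h; lra.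
have hn0 : (0 < n)%nat by apply: leq_trans hn.
set N := INR n in hN *.
set K := INR k in hK *.
set ell := ln (N * K).
set eta := ell / (lam * N * K).
have hNK : 2 <= N * K by nra.
have hell : / 2 < ell.
  rewrite /ell; case: (Rle_lt_or_eq_dec 2 (N * K) hNK) => h.
    have := ln_increasing 2 (N * K) ltac:(lra) h; have := ln_lt_2; lra.
  rewrite -h; exact: ln_lt_2.
set A := rsum a.
set B := rsum b.
have hA : A = N * lam.
  have h1 := hF 1; have h2 := hF (-1).
  rewrite !Fobj_eq -/A -/B -/N in h1 h2.
  have hN0 : N <> 0 by lra.
  have : / N * A = lam.
    have : / N * (A / 2 * 1 * 1 - B * 1) + / N * (A / 2 * -1 * -1 - B * -1) = lam / 2 * 1 * 1 - / N * B * 1 + (lam / 2 * -1 * -1 - / N * B * -1) by rewrite h1 h2.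
    move=> h; field_simplify in h; lra.
  move=> h; rewrite -h; field; lra.
set Bn := / N * B.
have hFq : forall x, Fobj a b x = lam / 2 * x * x - Bn * x by move=> x; rewrite hF.
have hxs : Bn = lam * xs.
  have := hmin (Bn / lam); rewrite !hFq.
  set z := Bn / lam.
  have hz : Bn = lam * z by rewrite /z; field; lra.
  rewrite hz => h.
  have : lam / 2 * (xs - z) ^ 2 <= 0 by nra.
  move=> h2.
  have h3 : Rsqr (xs - z) = 0 by rewrite /Rsqr; have := pow2_ge_0 (xs - z); rewrite /= Rmult_1_r in h2 *; nra.
  have := Rsqr_0_uniq _ h3 => h4.
  have -> : z = xs by lra.
  by [].
have hg0 : \big[Rplus/R0]_(u < n) (a u * xs - b u) = 0.
  have e := rsum_lin a b xs 1.
  have -> : \big[Rplus/R0]_(u < n) (a u * xs - b u) = rsum (fun i => a i * xs - b i * 1).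
    by rewrite /rsum; apply: eq_bigr => i _; ring.
  rewrite e -/A -/B hA.
  have : B = N * Bn by rewrite /Bn; field; lra.
  move=> ->; rewrite hxs; ring.
have hobj : forall x, Fobj a b x - Fobj a b xs = lam / 2 * (x - xs) ^ 2.
  move=> x; rewrite !hFq hxs; field.
have he : 0 <= eta.
  rewrite /eta; apply: Rmult_le_pos; first lra.
  apply/Rlt_le/Rinv_0_lt_compat; nra.
have hetaL : eta * L <= / (2 * N).
  have e1 : eta * L = ell / (N * K) * (L / lam) by rewrite /eta; field; lra.
  rewrite e1.
  apply: (@Rle_trans _ (ell / (N * K) * (K / (2 * ell)))).
    apply: Rmult_le_compat_l => //; apply: Rmult_le_pos; first lra.
    apply/Rlt_le/Rinv_0_lt_compat; nra.
  right; field; lra.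
have ha' : forall i, 0 <= a i <= L by move=> i; split; [exact: ha | exact: haL].
have hq : forall i, 0 <= 1 - eta * a i <= 1.
  move=> i; have := ha' i; move=> [h1 h2].
  have : eta * a i <= eta * L by apply: Rmult_le_compat_l.
  have : 0 <= eta * a i by apply: Rmult_le_pos.
  have : / (2 * N) <= 1 by apply: (Rmult_le_reg_l (2 * N)); [lra| rewrite Rinv_r; lra].
  lra.
set P := \big[Rmult/R1]_(i < n) (1 - eta * a i).
have hP : 0 <= P <= exp (- (ell / K)).
  have := @prod_exp _ (index_enum 'I_n) (fun i => eta * a i) (fun i => proj1 (hq i)).
  rewrite -/P -sumR_distrr.
  have -> : eta * \big[Rplus/R0]_(i <- index_enum 'I_n) a i = ell / K.
    rewrite -/(rsum a) -/A hA /eta; field; lra.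
  by [].
have hKp : 0 < K by lra.
have hNp : 0 < N by lra.
have hPk : P ^ k <= / (N * K).
  apply: (@Rle_trans _ (exp (- (ell / K)) ^ k)); first by apply: pow_incr.
  rewrite exp_pow -/K.
  have -> : K * - (ell / K) = - ell by field; lra.
  rewrite exp_Ropp /ell exp_ln; [lra | nra].
have hPk0 : 0 <= P ^ k by apply: pow_le; lra.
set r := (1 + / K) * P ^ 2.
have hKe : 1 + / K <= exp (/ K) by have := exp_ineq1_le (/ K); lra.
have hKi : 0 < / K by apply: Rinv_0_lt_compat.
have hP2 : P ^ 2 <= exp (- (ell / K)) ^ 2 by apply: pow_incr.
have hr : 0 <= r <= 1.
  split; first by rewrite /r; apply: Rmult_le_pos; [lra | apply: pow2_ge_0].
  apply: (@Rle_trans _ (exp (/ K) * exp (- (ell / K)) ^ 2)).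
    rewrite /r; apply: Rmult_le_compat => //; [lra | apply: pow2_ge_0].
  rewrite exp_pow -exp_plus -exp_0; apply: exp_le.
  have : ell / K >= / (2 * K).
    have -> : ell / K = ell * / K by [].
    have -> : / (2 * K) = / 2 * / K by field; lra.
    nra.
  have -> : / (2 * K) = / 2 * / K by field; lra.
  simpl INR; nra.
have hrk : r ^ k <= 3 * (/ (N * K)) ^ 2.
  rewrite /r Rpow_mult_distr -pow_mult Nat.mul_comm pow_mult.
  apply: Rmult_le_compat.
  - apply: pow_le; lra.
  - apply: pow_le; apply: pow_le; lra.
  - apply: (@Rle_trans _ (exp (/ K) ^ k)); first by apply: pow_incr; lra.
    rewrite exp_pow -/K.
    have -> : K * / K = 1 by field; lra.
    exact: exp_le_3.
  - by apply: pow_incr.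
set mu := 2 * eta ^ 2 * N * L * G.
set v := 3 * eta ^ 4 * L ^ 2 * N ^ 3 * G ^ 2.
have hstep : forall x, / INR (n`!) * psum (fun s => (epoch a b eta s x - xs) ^ 2)
    <= r * (x - xs) ^ 2 + (K * mu ^ 2 + v).
  by move=> x; apply: one_step.
have hD : 0 <= K * mu ^ 2 + v.
  have : 0 <= v by rewrite /v; have := pow2_ge_0 (eta ^ 2 * L * G); have := pow_le N 3 ltac:(lra); nra.
  have := pow2_ge_0 mu; nra.
have hexp := @expect_bound n (epoch a b eta) (fun x => Fobj a b x - Fobj a b xs) lam xs r (K * mu ^ 2 + v)
   hr (Rlt_le _ _ hl) hD hobj hstep k x0.
apply: Rle_trans hexp _.
rewrite -/K.
set y2 := (x0 - xs) ^ 2.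
have hy2 : 0 <= y2 by apply: pow2_ge_0.
set U1 := lam / (N ^ 2 * K ^ 2) * y2.
set U2 := G ^ 2 * L ^ 2 / lam ^ 3 * / (N ^ 2 * K ^ 2).
set U3 := G ^ 2 * L ^ 2 / lam ^ 3 * / (N * K ^ 3).
have hl3 : 0 < lam ^ 3 by apply: pow_lt.
have hU1 : 0 <= U1.
  rewrite /U1; apply: Rmult_le_pos => //; apply: Rmult_le_pos; first lra.
  apply/Rlt_le/Rinv_0_lt_compat; apply: Rmult_lt_0_compat; apply: pow_lt; lra.
have hU2 : 0 <= U2.
  rewrite /U2; apply: Rmult_le_pos; last by apply/Rlt_le/Rinv_0_lt_compat; apply: Rmult_lt_0_compat; apply: pow_lt; lra.
  apply: Rmult_le_pos; last by apply/Rlt_le/Rinv_0_lt_compat.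
  apply: Rmult_le_pos; apply: pow2_ge_0.
have hU3 : 0 <= U3.
  rewrite /U3; apply: Rmult_le_pos; last by apply/Rlt_le/Rinv_0_lt_compat; apply: Rmult_lt_0_compat; [lra|apply: pow_lt; lra].
  apply: Rmult_le_pos; last by apply/Rlt_le/Rinv_0_lt_compat.
  apply: Rmult_le_pos; apply: pow2_ge_0.
have eA : lam / 2 * (r ^ k * y2) <= 3 / 2 * U1.
  have -> : 3 / 2 * U1 = lam / 2 * (3 * (/ (N * K)) ^ 2 * y2) by rewrite /U1; field; lra.
  apply: Rmult_le_compat_l; first lra.
  by apply: Rmult_le_compat_r.
have eB : lam / 2 * (K * (K * mu ^ 2)) = 2 * ell ^ 4 * U2.
  rewrite /mu /U2 /eta; field; lra.
have eC : lam / 2 * (K * v) = 3 / 2 * ell ^ 4 * U3.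
  rewrite /v /U3 /eta; field; lra.
have hl4 : / 16 <= ell ^ 4.
  have : (/ 2) ^ 4 <= ell ^ 4 by apply: pow_incr; lra.
  have -> : (/ 2) ^ 4 = / 16 by field.
  done.
have -> : lam / 2 * (r ^ k * y2 + K * (K * mu ^ 2 + v)) =
   lam / 2 * (r ^ k * y2) + lam / 2 * (K * (K * mu ^ 2)) + lam / 2 * (K * v) by ring.
rewrite eB eC.
have -> : 100 * ell ^ 4 * (U1 + G ^ 2 * L ^ 2 / lam ^ 3 * (/ (N ^ 2 * K ^ 2) + / (N * K ^ 3)))
   = 100 * ell ^ 4 * (U1 + U2 + U3) by rewrite /U2 /U3; ring.
nra.
Qed.
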